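(* Fix a master $m$ and workers $n=1,\dots,N$ with parameters $L_m>0$, $u_{m,n}>0$, $a_{m,n}>0$. For a variable ${\boldsymbol{w}}=(l,k,t)$ with $l>0$ and parameter $u>0$ define $$g^{+}({\boldsymbol{w}})=\tfrac12(k^2+l^2),\quad g^{-}({\boldsymbol{w}})=\tfrac12(k+l)^2,\quad h^{+}({\boldsymbol{w}})=\tfrac12\left(k+le^{-\frac{ut}{l}}\right)^2,\quad h^{-}({\boldsymbol{w}})=\tfrac12\left(k^2+l^2e^{-\frac{2ut}{l}}\right),$$ and for points ${\boldsymbol{w}},{\boldsymbol{z}}$ $$\tilde g({\boldsymbol{w}},{\boldsymbol{z}})=g^{+}({\boldsymbol{w}})-g^{-}({\boldsymbol{z}})-\nabla g^{-}({\boldsymbol{z}})^T({\boldsymbol{w}}-{\boldsymbol{z}}),\qquad \tilde h({\boldsymbol{w}},{\boldsymbol{z}})=h^{+}({\boldsymbol{w}})-h^{-}({\boldsymbol{z}})-\nabla h^{-}({\boldsymbol{z}})^T({\boldsymbol{w}}-{\boldsymbol{z}}).$$ Write $\tilde g_{m,n},\tilde h_{m,n}$ for these with $u=u_{m,n}$ and ${\boldsymbol{w}}_{m,n}=(l_{m,n},k_{m,n},t)$, ${\boldsymbol{z}}_{m,n}$ a point of the same form; let ${\boldsymbol{w}}_m=({\boldsymbol{w}}_{m,1},\dots,{\boldsymbol{w}}_{m,N})$, ${\boldsymbol{z}}_m=({\boldsymbol{z}}_{m,1},\dots,{\boldsymbol{z}}_{m,N})$ (sharing the common coordinate $t$). Let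 $$\mathbb{E}[X_m(t)]=\sum_{n=1}^N k_{m,n}l_{m,n}\left(1-e^{-\frac{u_{m,n}}{l_{m,n}}(t-a_{m,n}l_{m,n})}\right).$$ Then for all such ${\boldsymbol{w}}_m,{\boldsymbol{z}}_m$, $$L_m-\mathbb{E}[X_m(t)]\le L_m+\sum_{n=1}^N\left[\tilde g_{m,n}({\boldsymbol{w}}_{m,n},{\boldsymbol{z}}_{m,n})+e^{u_{m,n}a_{m,n}}\tilde h_{m,n}({\boldsymbol{w}}_{m,n},{\boldsymbol{z}}_{m,n})\right]=:\tilde q_m({\boldsymbol{w}}_m,{\boldsymbol{z}}_m),$$ and $\tilde q_m(\cdot,{\boldsymbol{z}}_m)$ is a convex function of ${\boldsymbol{w}}_m$.
   Context: Setting: probabilistic worker assignment in a coded distributed computing system, where worker $n$ serves master $m$ with probability $k_{m,n}\in[0,1]$ and is allocated $l_{m,n}>0$ coded rows; $\mathbb{E}[X_m(t)]$ is the (simplified) expected number of results master $m$ has received by time $t$. Gradients $\nabla$ are with respect to ${\boldsymbol{w}}=(l,k,t)$. *)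

(* Defs.v *)
From Stdlib Require Import Reals.
From Coquelicot Require Import Coquelicot.
Open Scope R_scope.

(* Finite sum f 0 + ... + f (N-1) over the workers n = 1..N (indexed 0..N-1). *)
Fixpoint rsum (N : nat) (f : nat -> R) : R :=
  match N with
  | O => 0
  | S n => rsum n f + f n
  end.

Definition gplus (l k t : R) : R := / 2 * (k ^ 2 + l ^ 2).
Definition gminus (l k t : R) : R := / 2 * (k + l) ^ 2.
Definition hplus (u : R) (l k t : R) : R := / 2 * (k + l * exp (- (u * t / l))) ^ 2.
Definition hminus (u : R) (l k t : R) : R :=
  / 2 * (k ^ 2 + l ^ 2 * exp (- (2 * u * t / l))).

Definition grad_dot (f : R -> R -> R -> R) (l0 k0 t0 : R) (l k t : R) : R :=
  Derive (fun x => f x k0 t0) l0 * (l - l0)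
  + Derive (fun x => f l0 x t0) k0 * (k - k0)
  + Derive (fun x => f l0 k0 x) t0 * (t - t0).

Definition gtilde (l k t l0 k0 t0 : R) : R :=
  gplus l k t - gminus l0 k0 t0 - grad_dot gminus l0 k0 t0 l k t.
Definition htilde (u : R) (l k t l0 k0 t0 : R) : R :=
  hplus u l k t - hminus u l0 k0 t0 - grad_dot (hminus u) l0 k0 t0 l k t.

Definition EX (N : nat) (u a : nat -> R) (l k : nat -> R) (t : R) : R :=
  rsum N (fun n => k n * l n * (1 - exp (- (u n / l n * (t - a n * l n))))).

Definition qtilde (N : nat) (Lm : R) (u a : nat -> R)
  (l k : nat -> R) (t : R) (l0 k0 : nat -> R) (t0 : R) : R :=
  Lm + rsum N (fun n =>
    gtilde (l n) (k n) t (l0 n) (k0 n) t0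
    + exp (u n * a n) * htilde (u n) (l n) (k n) t (l0 n) (k0 n) t0).

Definition admissible (N : nat) (l k : nat -> R) : Prop :=
  forall n, (n < N)%nat -> 0 < l n /\ 0 <= k n <= 1.

(* Main.v *)
Require Import Defs.
From Stdlib Require Import Reals Lra Lia.
From Coquelicot Require Import Coquelicot.
Open Scope R_scope.

Lemma D_gm_l k0 t0 l0 : Derive (fun x => gminus x k0 t0) l0 = k0 + l0.
Proof. apply is_derive_unique. unfold gminus. auto_derive. auto. field. Qed.
Lemma D_gm_k k0 t0 l0 : Derive (fun x => gminus l0 x t0) k0 = k0 + l0.
Proof. apply is_derive_unique. unfold gminus. auto_derive. auto. field. Qed.
Lemma D_gm_t k0 t0 l0 : Derive (fun x => gminus l0 k0 x) t0 = 0.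
Proof. apply is_derive_unique. unfold gminus. auto_derive. auto. field. Qed.
Lemma D_hm_l u k0 t0 l0 : l0 <> 0 -> Derive (fun x => hminus u x k0 t0) l0 = exp (-(2*u*t0/l0)) * (l0 + u*t0).
Proof. intros. apply is_derive_unique. unfold hminus. auto_derive. auto. unfold Rdiv. field. auto. Qed.
Lemma D_hm_k u k0 t0 l0 : Derive (fun x => hminus u l0 x t0) k0 = k0.
Proof. apply is_derive_unique. unfold hminus. auto_derive. auto. field. Qed.
Lemma D_hm_t u k0 t0 l0 : l0 <> 0 -> Derive (fun x => hminus u l0 k0 x) t0 = - (u * l0) * exp (-(2*u*t0/l0)).
Proof. intros. apply is_derive_unique. unfold hminus. auto_derive. auto. unfold Rdiv. field. auto. Qed.

Lemma exp2 x : exp (- (2 * x)) = exp (- x) * exp (- x).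
Proof. rewrite <- exp_plus. f_equal. ring. Qed.

(* tangent of perspective p(l,t) = l exp(-(u t / l)) *)
Lemma ptan u l t l0 t0 : 0 < l -> 0 < l0 ->
  exp (-(u*t0/l0)) * l0 + exp (-(u*t0/l0)) * (1 + u*t0/l0) * (l - l0)
  - u * exp (-(u*t0/l0)) * (t - t0) <= l * exp (-(u*t/l)).
Proof.
  intros Hl Hl0.
  replace (exp (-(u*t/l))) with (exp (-(u*t0/l0)) * exp (u*t0/l0 - u*t/l)).
  2:{ rewrite <- exp_plus. f_equal. ring. }
  pose proof (exp_ineq1_le (u*t0/l0 - u*t/l)) as H.
  pose proof (exp_pos (-(u*t0/l0))) as He.
  set (E := exp (-(u*t0/l0))) in *.
  set (F := exp (u*t0/l0 - u*t/l)) in *.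
  apply Rle_trans with (l * (E * (1 + (u*t0/l0 - u*t/l)))).
  - right. field. lra.
  - apply Rmult_le_compat_l. lra. apply Rmult_le_compat_l; lra.
Qed.

Lemma hm_tan u l k t l0 k0 t0 : 0 < l -> 0 < l0 ->
  hminus u l0 k0 t0 + grad_dot (hminus u) l0 k0 t0 l k t <= hminus u l k t.
Proof.
  intros Hl Hl0. unfold grad_dot.
  rewrite D_hm_l, D_hm_k, D_hm_t by lra.
  unfold hminus.
  replace (2*u*t0/l0) with (2*(u*t0/l0)) by (field; lra).
  replace (2*u*t/l) with (2*(u*t/l)) by (field; lra).
  rewrite !exp2.
  pose proof (ptan u l t l0 t0 Hl Hl0) as H.
  pose proof (exp_pos (-(u*t0/l0))) as He.
  set (E := exp (-(u*t0/l0))) in *.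
  set (P := l * exp (-(u*t/l))) in *.
  set (G := E * l0 + E * (1 + u * t0 / l0) * (l - l0) - u * E * (t - t0)) in *.
  replace (l ^ 2 * (exp (- (u * t / l)) * exp (- (u * t / l)))) with (P*P) by (unfold P; ring).
  assert (HP : (E*l0) * G <= (E*l0) * P) by (apply Rmult_le_compat_l; [nra|lra]).
  assert (Hk : 0 <= (k - k0)^2) by apply pow2_ge_0.
  assert (Hq : 0 <= (P - E*l0)^2) by apply pow2_ge_0.
  assert (HG : (E*l0)*G = E*E*l0*l0 + E * E * (l0 + u * t0) * (l - l0) - u*l0*E*E*(t-t0)) by (unfold G; field; lra).
  lra.
Qed.

Lemma gm_tan l k t l0 k0 t0 :
  gminus l0 k0 t0 + grad_dot gminus l0 k0 t0 l k t <= gminus l k t.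
Proof.
  unfold grad_dot. rewrite D_gm_l, D_gm_k, D_gm_t. unfold gminus.
  assert (0 <= (k + l - (k0 + l0))^2) by apply pow2_ge_0. lra.
Qed.

Lemma up_n u a l k t l0 k0 t0 : 0 < l -> 0 < l0 ->
  - (k * l * (1 - exp (- (u / l * (t - a * l))))) <=
  gtilde l k t l0 k0 t0 + exp (u * a) * htilde u l k t l0 k0 t0.
Proof.
  intros Hl Hl0.
  pose proof (gm_tan l k t l0 k0 t0). pose proof (hm_tan u l k t l0 k0 t0 Hl Hl0).
  unfold gtilde, htilde.
  replace (exp (- (u / l * (t - a * l)))) with (exp (u*a) * exp (-(u*t/l))).
  2:{ rewrite <- exp_plus. f_equal. field. lra. }
  assert (E1 : gplus l k t - gminus l k t = - (k*l)) by (unfold gplus, gminus; field).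
  assert (E2 : hplus u l k t - hminus u l k t = k * (l * exp (-(u*t/l)))).
  { unfold hplus, hminus. replace (2*u*t/l) with (2*(u*t/l)) by (field; lra).
    rewrite exp2. field. }
  pose proof (exp_pos (u*a)) as Hea.
  set (X := exp (u*a)) in *.
  assert (X * (hminus u l0 k0 t0 + grad_dot (hminus u) l0 k0 t0 l k t) <= X * hminus u l k t)
    by (apply Rmult_le_compat_l; lra).
  nra.
Qed.

Lemma hp_conv u l1 k1 t1 l2 k2 t2 th : 0 < l1 -> 0 < l2 -> 0 <= k1 -> 0 <= k2 -> 0 <= th <= 1 ->
  hplus u (th*l1 + (1-th)*l2) (th*k1+(1-th)*k2) (th*t1+(1-th)*t2)
  <= th * hplus u l1 k1 t1 + (1-th) * hplus u l2 k2 t2.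
Proof.
  intros Hl1 Hl2 Hk1 Hk2 Hth.
  set (l := th*l1 + (1-th)*l2). set (k := th*k1+(1-th)*k2). set (t := th*t1+(1-th)*t2).
  assert (Hl : 0 < l) by (unfold l; nra).
  pose proof (ptan u l1 t1 l t Hl1 Hl) as P1.
  pose proof (ptan u l2 t2 l t Hl2 Hl) as P2.
  assert (Hp : l * exp (-(u*t/l)) <= th * (l1 * exp (-(u*t1/l1))) + (1-th) * (l2 * exp (-(u*t2/l2)))).
  { set (E := exp (-(u*t/l))) in *. set (s := u*t/l) in *.
    assert (th * (E * l + E * (1 + s) * (l1 - l) - u * E * (t1 - t)) + (1-th) * (E * l + E * (1 + s) * (l2 - l) - u * E * (t2 - t)) = l * E) by (unfold l, t; ring).
    assert (th * (E * l + E * (1 + s) * (l1 - l) - u * E * (t1 - t)) <= th * (l1 * exp (-(u*t1/l1)))) by (apply Rmult_le_compat_l; lra).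
    assert ((1-th) * (E * l + E * (1 + s) * (l2 - l) - u * E * (t2 - t)) <= (1-th) * (l2 * exp (-(u*t2/l2)))) by (apply Rmult_le_compat_l; lra).
    lra. }
  unfold hplus.
  set (p := l * exp (-(u*t/l))) in *.
  set (p1 := l1 * exp (-(u*t1/l1))) in *.
  set (p2 := l2 * exp (-(u*t2/l2))) in *.
  assert (0 < p) by (unfold p; apply Rmult_lt_0_compat; [lra| apply exp_pos]).
  assert (Hk : 0 <= k) by (unfold k; nra).
  assert (Hq : k + p <= th * (k1 + p1) + (1-th) * (k2+p2)) by (unfold k; lra).
  assert ((k+p)^2 <= (th * (k1 + p1) + (1-th) * (k2+p2))^2) by (apply pow_incr; lra).
  assert (0 <= th*(1-th)*((k1+p1) - (k2+p2))^2) by (apply Rmult_le_pos; [nra|apply pow2_ge_0]).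
  nra.
Qed.

Lemma conv_n u X l1 k1 t1 l2 k2 t2 th l0 k0 t0 : 0 < X -> 0 < l1 -> 0 < l2 -> 0 <= k1 -> 0 <= k2 -> 0 <= th <= 1 ->
  gtilde (th*l1 + (1-th)*l2) (th*k1+(1-th)*k2) (th*t1+(1-th)*t2) l0 k0 t0
  + X * htilde u (th*l1 + (1-th)*l2) (th*k1+(1-th)*k2) (th*t1+(1-th)*t2) l0 k0 t0
  <= th * (gtilde l1 k1 t1 l0 k0 t0 + X * htilde u l1 k1 t1 l0 k0 t0)
   + (1-th) * (gtilde l2 k2 t2 l0 k0 t0 + X * htilde u l2 k2 t2 l0 k0 t0).
Proof.
  intros HX Hl1 Hl2 Hk1 Hk2 Hth.
  pose proof (hp_conv u l1 k1 t1 l2 k2 t2 th Hl1 Hl2 Hk1 Hk2 Hth) as H.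
  assert (Hg : gplus (th*l1 + (1-th)*l2) (th*k1+(1-th)*k2) (th*t1+(1-th)*t2)
     <= th * gplus l1 k1 t1 + (1-th) * gplus l2 k2 t2).
  { unfold gplus.
    assert (0 <= th*(1-th)*((k1-k2)^2+(l1-l2)^2)) by (apply Rmult_le_pos; [nra| pose proof (pow2_ge_0 (k1-k2)); pose proof (pow2_ge_0 (l1-l2)); lra]).
    nra. }
  unfold gtilde, htilde, grad_dot.
  set (A1 := Derive _ l0). set (A2 := Derive _ k0). set (A3 := Derive _ t0).
  set (B1 := Derive _ l0). set (B2 := Derive _ k0). set (B3 := Derive _ t0).
  assert (X * hplus u (th*l1 + (1-th)*l2) (th*k1+(1-th)*k2) (th*t1+(1-th)*t2) <= X * (th * hplus u l1 k1 t1 + (1-th) * hplus u l2 k2 t2)) by (apply Rmult_le_compat_l; lra).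
  nra.
Qed.

Lemma rsum_le N f g : (forall n, (n < N)%nat -> f n <= g n) -> rsum N f <= rsum N g.
Proof.
  induction N; simpl; intros H. lra.
  assert (f N <= g N) by (apply H; lia). assert (rsum N f <= rsum N g) by (apply IHN; intros; apply H; lia). lra.
Qed.

Lemma rsum_lin N th f g : rsum N (fun n => th * f n + (1-th) * g n) = th * rsum N f + (1-th) * rsum N g.
Proof. induction N; simpl. ring. rewrite IHN. ring. Qed.

Lemma rsum_opp N f : rsum N (fun n => - f n) = - rsum N f.
Proof. induction N; simpl. ring. rewrite IHN. ring. Qed.

Theorem lemma2 (N : nat) (Lm : R) (u a : nat -> R)
  (HL : 0 < Lm)
  (Hu : forall n, (n < N)%nat -> 0 < u n)
  (Ha : forall n, (n < N)%nat -> 0 < a n) :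
  (* the upper bound *)
  (forall (l k : nat -> R) (t : R) (l0 k0 : nat -> R) (t0 : R),
     admissible N l k -> admissible N l0 k0 ->
     Lm - EX N u a l k t <= qtilde N Lm u a l k t l0 k0 t0)
  /\
  (* convexity of q~_m( . , z_m) in w_m = (l, k, t) over the admissible set *)
  (forall (l0 k0 : nat -> R) (t0 : R), admissible N l0 k0 ->
   forall (l1 k1 : nat -> R) (t1 : R) (l2 k2 : nat -> R) (t2 : R) (th : R),
     admissible N l1 k1 -> admissible N l2 k2 -> 0 <= th <= 1 ->
     qtilde N Lm u a
       (fun n => th * l1 n + (1 - th) * l2 n)
       (fun n => th * k1 n + (1 - th) * k2 n)
       (th * t1 + (1 - th) * t2) l0 k0 t0
     <= th * qtilde N Lm u a l1 k1 t1 l0 k0 t0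
        + (1 - th) * qtilde N Lm u a l2 k2 t2 l0 k0 t0).
Proof.
  split.
  - intros l k t l0 k0 t0 Hw Hz. unfold qtilde, EX.
    rewrite <- (Ropp_involutive (rsum N _)), <- rsum_opp.
    cut (rsum N (fun n => - (k n * l n * (1 - exp (- (u n / l n * (t - a n * l n)))))) <=
      rsum N (fun n => gtilde (l n) (k n) t (l0 n) (k0 n) t0 +
        exp (u n * a n) * htilde (u n) (l n) (k n) t (l0 n) (k0 n) t0)). lra.
    apply rsum_le. intros n Hn.
    destruct (Hw n Hn), (Hz n Hn). apply up_n; lra.
  - intros l0 k0 t0 Hz l1 k1 t1 l2 k2 t2 th Hw1 Hw2 Hth. unfold qtilde.
    match goal with |- _ <= th * (Lm + rsum N ?F) + (1 - th) * (Lm + rsum N ?G) =>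
      assert (E : th * (Lm + rsum N F) + (1 - th) * (Lm + rsum N G) = Lm + rsum N (fun n => th * F n + (1-th) * G n)) by (rewrite rsum_lin; ring) end.
    rewrite E. apply Rplus_le_compat_l. apply rsum_le. intros n Hn.
    destruct (Hw1 n Hn), (Hw2 n Hn).
    apply conv_n; try lra. apply exp_pos.
Qed.
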